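(* Every quasi 4-connected graph $G$ has a star-decomposition of adhesion three whose central torso is internally 4-connected or isomorphic to $K_4$ or to $K_3$, and all of whose leaf-bags have exactly four vertices.
   Context: All graphs are finite and simple. A separation of $G$ is an unordered pair $\{A,B\}$ with $A\cup B=V(G)$ and no edge between $A\setminus B$ and $B\setminus A$; its order is $|A\cap B|$; a 3-separation has order exactly 3; it is proper if $A\setminus B\ne\emptyset\ne B\setminus A$. A graph is quasi 4-connected if it is 3-connected, has more than four vertices, and every 3-separation $\{A,B\}$ has a side ($A$ or $B$) with at most four vertices. A graph is internally 4-connected if it is 3-connected, has more than four vertices, and every proper 3-separation $\{A,B\}$ has independent separator $A\cap B$ and satisfies $|A\setminus B|=1$ or $|B\setminus A|=1$. A star-decomposition is a tree-decomposition $(T,(V_t)_{t\in T})$ whose tree $T$ is a star $K_{1,n}$ ($n\ge0$) with a designated central node $c$ (for $n=1$ either node may serve as centre); it has adhesion three if every adhesion set $V_t\cap V_{t'}$ for an edge $tt'$ of $T$ has exactly three vertices; leaf-bags are the bags $V_t$ of the leaves $t\neq c$; the central torso is the graph obtained from $G[V_c]$ by making every adhesion set $V_c\cap V_t$ a clique. *)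

(* Defs.v *)
(* A finite simple graph is a finType T with a symmetric,
   irreflexive relation e : rel T.  All graph notions below are stated for
   the graph (S, e) with vertex set S : {set T} and edges e restricted to S;
   the graph G itself is ([set: T], e). *)
From mathcomp Require Import all_boot.
Set Implicit Arguments.
Unset Strict Implicit.
Unset Printing Implicit Defensive.

Section Graphs.
Variable T : finType.

Definition restr (S : {set T}) (e : rel T) : rel T :=
  [rel x y | [&& x \in S, y \in S & e x y]].

(* (S, e) is connected (nonempty-ness is irrelevant below) *)
Definition connected_on (S : {set T}) (e : rel T) : Prop :=
  forall x y, x \in S -> y \in S -> connect (restr S e) x y.

Definition k_connected (k : nat) (S : {set T}) (e : rel T) : Prop :=
  k < #|S| /\
  forall X : {set T}, X \subset S -> #|X| < k -> connected_on (S :\: X) e.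

Definition separation (S : {set T}) (e : rel T) (A B : {set T}) : Prop :=
  [/\ A \subset S, B \subset S, A :|: B = S &
      forall x y, x \in A :\: B -> y \in B :\: A -> ~~ e x y].

Definition sep_order (A B : {set T}) : nat := #|A :&: B|.

Definition proper_sep (A B : {set T}) : Prop :=
  A :\: B != set0 /\ B :\: A != set0.

Definition quasi_4_connected (S : {set T}) (e : rel T) : Prop :=
  [/\ k_connected 3 S e, 4 < #|S| &
      forall A B, separation S e A B -> sep_order A B = 3 ->
        #|A| <= 4 \/ #|B| <= 4].

Definition internally_4_connected (S : {set T}) (e : rel T) : Prop :=
  [/\ k_connected 3 S e, 4 < #|S| &
      forall A B, separation S e A B -> sep_order A B = 3 -> proper_sep A B ->
        (forall x y, x \in A :&: B -> y \in A :&: B -> ~~ e x y) /\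
        (#|A :\: B| = 1 \/ #|B :\: A| = 1)].

Definition iso_complete (n : nat) (S : {set T}) (e : rel T) : Prop :=
  exists f : 'I_n -> T,
    [/\ injective f, forall x, x \in S <-> (exists i, f i = x) &
        forall i j, e (f i) (f j) = (i != j)].

Definition tree_decomposition (I : finType) (tr : rel I)
  (bags : I -> {set T}) (S : {set T}) (e : rel T) : Prop :=
  [/\ forall t, bags t \subset S,
      forall x, x \in S -> exists t, x \in bags t,
      forall x y, x \in S -> y \in S -> e x y ->
        exists t, (x \in bags t) && (y \in bags t) &
      forall x t1 t2, x \in bags t1 -> x \in bags t2 ->
        connect [rel s t | [&& tr s t, x \in bags s & x \in bags t]] t1 t2].

(* the star K_{1,n}: nodes option 'I_n, centre None, leaves Some i *)
Definition star_rel (n : nat) : rel (option (ordinal n)) :=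
  [rel s t | (s == None) != (t == None)].

Definition star_decomposition (n : nat) (bags : option 'I_n -> {set T})
  (S : {set T}) (e : rel T) : Prop :=
  tree_decomposition (@star_rel n) bags S e.

Definition adhesion_three (n : nat) (bags : option 'I_n -> {set T}) : Prop :=
  forall i : 'I_n, #|bags None :&: bags (Some i)| = 3.

Definition torso_rel (n : nat) (bags : option 'I_n -> {set T}) (e : rel T)
  : rel T :=
  [rel x y | [&& x != y, x \in bags None, y \in bags None &
     e x y || [exists i : 'I_n, (x \in bags (Some i)) && (y \in bags (Some i))]]].

End Graphs.

(* Main.v *)
Require Import Defs.
From mathcomp Require Import all_boot zify.
Set Implicit Arguments.
Unset Strict Implicit.
Unset Printing Implicit Defensive.

Section Gen.
Variable T : finType.
Variable e : rel T.
Hypothesis esy : symmetric e.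
Hypothesis eirr : irreflexive e.

Definition Nb (x : T) : {set T} := [set y | e x y].

Lemma deg3 : k_connected 3 [set: T] e -> 4 < #|T| -> forall x, 3 <= #|Nb x|.
Proof.
case=> _ hc h4 x; rewrite leqNgt; apply/negP => hlt.
have hcon := hc (Nb x) (subsetT _) hlt.
have : exists y, y \notin x |: Nb x.
  apply/existsP; rewrite -negb_forall; apply/negP => /forallP hall.
  have : #|[set: T]| <= #|x |: Nb x|.
    by apply: subset_leq_card; apply/subsetP => z _; rewrite hall.
  rewrite cardsT cardsU1; lia.
case=> y; rewrite !inE negb_or => /andP [ynx ynN].
have xin : x \in [set: T] :\: Nb x by rewrite !inE eirr.
have yin : y \in [set: T] :\: Nb x by rewrite !inE andbT.
have := hcon x y xin yin.
have cl : closed (restr ([set: T] :\: Nb x) e) (pred1 x).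
  move=> u v /=; rewrite /restr /= !inE andbT => /and3P [hu hv huv].
  case: eqP => [ux|ux]; first by subst u; rewrite huv in hv.
  case: eqP => // vx; subst v; by rewrite esy huv in hu.
move/(closed_connect cl); rewrite !inE eqxx /= => /esym/eqP yx.
by rewrite yx eqxx in ynx.
Qed.
End Gen.


Section Main.
Variable T : finType.
Variable e : rel T.
Hypothesis esy : symmetric e.
Hypothesis eirr : irreflexive e.
Hypothesis hq : quasi_4_connected [set: T] e.
Variable D : {set T}.
Hypothesis Dind : forall u w, u \in D -> w \in D -> ~~ e u w.
Hypothesis DL : forall v, v \in D -> #|Nb e v| = 3.
Hypothesis Dmax : forall x, x \notin D -> #|Nb e x| = 3 -> exists2 v, v \in D & e x v.

Definition bags (o : option 'I_#|D|) : {set T} :=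
  if o is Some i then enum_val i |: Nb e (enum_val i) else ~: D.

Definition H := torso_rel bags e.

Lemma NbC v w : v \in D -> e v w -> w \notin D.
Proof. by move=> vD evw; apply/negP => wD; move: (Dind vD wD); rewrite evw. Qed.

Lemma bagsS v (vD : v \in D) : bags (Some (enum_rank_in vD v)) = v |: Nb e v.
Proof. by rewrite /= enum_rankK_in. Qed.

Lemma torso_clique v u w : v \in D -> e v u -> e v w -> u != w -> H u w.
Proof.
move=> vD evu evw uw; rewrite /H /torso_rel /= uw !inE (NbC vD evu) (NbC vD evw) /=.
apply/orP; right; apply/existsP; exists (enum_rank_in vD v).
by rewrite /= enum_rankK_in // !inE evu evw !orbT.
Qed.

Lemma H_sym : symmetric H.
Proof.
move=> u w; rewrite /H /torso_rel /= eq_sym esy; congr (_ && _).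
rewrite andbCA; congr (_ && (_ && (_ || _))).
by apply/existsP/existsP => [] [i /andP [h1 h2]]; exists i; rewrite h1 h2.
Qed.

Lemma H_C u w : H u w -> [/\ u \notin D, w \notin D & u != w].
Proof. by rewrite /H /torso_rel /= !inE => /and4P [-> -> -> _]. Qed.

Lemma H_e u w : u \notin D -> w \notin D -> e u w -> H u w.
Proof.
move=> uD wD euw; rewrite /H /torso_rel /= !inE uD wD euw /= andbT.
by apply/negP => /eqP E; subst w; rewrite eirr in euw.
Qed.

Lemma H_cases u w : H u w -> e u w \/ exists2 v, v \in D & e v u && e v w.
Proof.
rewrite /H /torso_rel /= !inE => /and4P [_ uD wD /orP [->|/existsP [i]]]; first by left.
rewrite /= !inE => /andP [/orP [/eqP E|hu] /orP [/eqP E'|hw]].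
- by move: uD; rewrite E enum_valP.
- by move: uD; rewrite E enum_valP.
- by move: wD; rewrite E' enum_valP.
by right; exists (enum_val i); rewrite ?enum_valP // hu hw.
Qed.


Lemma conn_H (X : {set T}) : X \subset ~: D -> #|X| < 3 -> connected_on (~: D :\: X) H.
Proof.
move=> XC X3 x y; rewrite !inE => /andP [xX xD] /andP [yX yD].
case: hq => [[_ hc] _ _].
have := hc X (subsetT _) X3 x y; rewrite !inE xX yX => /(_ isT isT) /connectP [p pth yE]; subst y.
set R := restr (~: D :\: X) H.
pose Pz z := if z \in D then forall w, e z w -> w \notin X -> connect R x w
             else connect R x z.
have step a b : Pz a -> a \notin X -> b \notin X -> e a b -> Pz b.
  rewrite /Pz => Pa aX bX eab.
  case: (boolP (a \in D)) Pa => aD Pa; case: (boolP (b \in D)) => bD.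
  - by move: (Dind aD bD); rewrite eab.
  - by apply: Pa.
  - move=> w ebw wX; case: (eqVneq a w) => [<- //|aw].
    apply: connect_trans Pa (connect1 _).
    rewrite /R /restr /= !inE aX wX aD (NbC bD ebw) /=.
    by apply: torso_clique bD _ ebw aw; rewrite esy.
  - apply: connect_trans Pa (connect1 _).
    by rewrite /R /restr /= !inE aX bX aD bD /=; apply: H_e.
suff : Pz (last x p) by rewrite /Pz (negbTE yD).
clear yD yX.
  have Px : Pz x by rewrite /Pz (negbTE xD).
  move: Px; set x0 := x; move: xX pth; rewrite -/x0; clearbody x0.
  elim: p x0 => [//|b p IH] a aX /= /andP [hab hp] Pa.
  move: hab; rewrite /restr /= !inE => /and3P [_ /andP [bX _] eab].
  exact: IH bX hp (step a b Pa aX bX eab).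
Qed.


Lemma core (P Q : {set T}) x : separation [set: T] e P Q -> #|P :&: Q| = 3 ->
  #|P| <= 4 -> x \in P :\: Q -> x \notin D -> P :&: Q \subset ~: D -> False.
Proof.
case=> _ _ PQ hsep h3 h4 xPQ xD PQC.
have deg : 3 <= #|Nb e x|.
  case: hq => hk h5 _; apply: deg3 => //; by rewrite -cardsT.
have NP : Nb e x \subset P :&: Q.
  apply/subsetP => w; rewrite inE => exw.
  have wPQ: w \in P :|: Q by rewrite PQ inE.
  have wP : w \in P.
    case/setUP: wPQ => // wQ; case: (boolP (w \in P)) => // wnP.
    by have := hsep x w xPQ; rewrite !inE wQ wnP /= => /(_ isT); rewrite exw.
  rewrite inE wP /=; case: (boolP (w \in Q)) => // wnQ.
  have xw : x != w by apply/negP => /eqP E; subst w; rewrite eirr in exw.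
  have : #|[set x; w]| <= #|P :\: Q|.
    apply: subset_leq_card; apply/subsetP => z; rewrite !inE => /orP [/eqP ->|/eqP ->].
      by move: xPQ; rewrite !inE.
    by rewrite wnQ wP.
  rewrite cards2 xw cardsD h3; lia.
have N3 : #|Nb e x| = 3.
  have := subset_leq_card NP; rewrite h3; lia.
case: (Dmax xD N3) => v vD exv.
have : v \in ~: D by apply: (subsetP PQC); apply: (subsetP NP); rewrite inE.
by rewrite inE vD.
Qed.


Lemma sep_swap (S A B : {set T}) (r : rel T) : symmetric r ->
  separation S r A B -> separation S r B A.
Proof.
move=> rs [a b u h]; split => //; first by rewrite setUC.
by move=> x y hx hy; rewrite rs; apply: h.
Qed.

Lemma noSep (A B : {set T}) : separation (~: D) H A B -> #|A :&: B| = 3 ->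
  proper_sep A B -> False.
Proof.
case=> AC BC ABC hsep h3 [pA pB].
have aC z : z \in D -> z \notin A.
  by move=> zD; apply/negP => /(subsetP AC); rewrite inE zD.
have bC z : z \in D -> z \notin B.
  by move=> zD; apply/negP => /(subsetP BC); rewrite inE zD.
have inAB z : z \notin D -> (z \in A) || (z \in B).
  by move=> zD; rewrite -in_setU ABC inE.
set A' := A :|: [set v in D | Nb e v \subset A].
set B' := B :|: [set v in D | ~~ (Nb e v \subset A)].
have sepG : separation [set: T] e A' B'.
  split; [exact: subsetT | exact: subsetT | | ].
    apply/setP => z; rewrite !inE; case: (boolP (z \in D)) => zD /=.
      by case: (Nb e z \subset A); rewrite !orbT.
    by rewrite !orbF; apply: inAB.
  move=> x y hx hy; apply/negP => exy.
  rewrite /A' /B' !inE in hx hy.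
  case: (boolP (x \in D)) hx => xD hx; case: (boolP (y \in D)) hy => yD hy.
  - by move: (Dind xD yD); rewrite exy.
    move: hx hy; rewrite (negbTE (aC _ xD)) (negbTE (bC _ xD)) /= !orbF.
    move=> /andP [_ NA] /andP [yA _].
    have yN : y \in Nb e x by rewrite inE.
    by move: yA; rewrite (subsetP NA _ yN).
  - move: hx hy; rewrite (negbTE (aC _ yD)) (negbTE (bC _ yD)) /= !orbF.
    move=> /andP [xB xA] /andP [_ NA].
    case/subsetPn: NA => w; rewrite inE => eyw wA.
    have wD := NbC yD eyw.
    have wB : w \in B by move: (inAB w wD); rewrite (negbTE wA).
    have xw : x != w by apply/negP => /eqP E; subst w; rewrite xA in wA.
    have := hsep x w; rewrite !inE xB xA wB wA => /(_ isT isT).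
    by rewrite (torso_clique yD _ eyw xw) // esy.
  - move: hx hy; rewrite /= !orbF.
    move=> /andP [xB xA] /andP [yA yB].
    have := hsep x y; rewrite !inE xB xA yA yB => /(_ isT isT).
    by rewrite H_e.
have IAB : A' :&: B' = A :&: B.
  apply/setP => z; rewrite !inE; case: (boolP (z \in D)) => zD /=.
    rewrite (negbTE (aC _ zD)) (negbTE (bC _ zD)) /=.
    by case: (Nb e z \subset A).
  by rewrite !orbF.
have IC : A' :&: B' \subset ~: D by rewrite IAB; apply: subset_trans (subsetIl _ _) AC.
case: hq => _ _ hq4.
case: (hq4 A' B' sepG); first by rewrite /sep_order IAB.
  move=> hA; case/set0Pn: pA => x; rewrite inE => /andP [xB xA].
  have xD : x \notin D by apply/negP => /aC; rewrite xA.
  apply: (core sepG _ hA _ xD IC); first by rewrite IAB.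
  by rewrite !inE xA (negbTE xB) (negbTE xD).
move=> hB; case/set0Pn: pB => x; rewrite inE => /andP [xA xB].
have xD : x \notin D by apply/negP => /bC; rewrite xB.
apply: (core (sep_swap esy sepG) _ hB _ xD); first by rewrite setIC IAB.
  by rewrite !inE xB (negbTE xA) (negbTE xD).
by rewrite setIC.
Qed.


Lemma complete x y : #|~: D| <= 4 -> x \in ~: D -> y \in ~: D -> x != y -> H x y.
Proof.
move=> h4 xC yC xy; case: (boolP (H x y)) => // nH; exfalso.
set X := ~: D :\: [set x; y].
have sub : [set x; y] \subset ~: D.
  by apply/subsetP => z; rewrite !inE => /orP [/eqP ->|/eqP ->]; rewrite -in_setC.
have XC : X \subset ~: D by apply: subsetDl.
have X3 : #|X| < 3 by rewrite /X cardsD (setIidPr sub) cards2 xy; lia.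
have xin : x \in ~: D :\: X by rewrite /X !inE eqxx /=; move: xC; rewrite inE.
have yin : y \in ~: D :\: X by rewrite /X !inE eqxx orbT /=; move: yC; rewrite inE.
have := conn_H XC X3 xin yin.
have cl : closed (restr (~: D :\: X) H) (pred1 x).
  move=> u v; rewrite /restr /= => /and3P [hu hv huv].
  have [_ _ uv] := H_C huv.
  have memxy z : z \in ~: D :\: X -> (z == x) || (z == y).
    by rewrite /X !inE; case: (z \in D); rewrite /= ?andbF ?andbT ?negbK.
  case/orP: (memxy u hu) => /eqP eu; case/orP: (memxy v hv) => /eqP ev; subst u v.
  - by rewrite eqxx in uv.
  - by rewrite huv in nH.
  - by rewrite H_sym huv in nH.
  - by rewrite eqxx in uv.
move/(closed_connect cl); rewrite !inE eqxx => /esym /eqP yx.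
by rewrite yx eqxx in xy.
Qed.

Lemma iso n : #|~: D| = n -> n <= 4 -> iso_complete n (~: D) H.
Proof.
move=> hn n4; exists (fun i => enum_val (cast_ord (esym hn) i)); split.
- by move=> i j /enum_val_inj /cast_ord_inj.
- move=> x; split => [xC|[i <-]]; last exact: enum_valP.
  by exists (cast_ord hn (enum_rank_in xC x)); rewrite cast_ordK enum_rankK_in.
- move=> i j; case: (eqVneq i j) => [<-|ij].
    by apply/negP => /H_C [_ _]; rewrite eqxx.
  apply: complete; rewrite ?hn ?enum_valP //.
  by apply/negP => /eqP /enum_val_inj /cast_ord_inj /eqP; rewrite (negbTE ij).
Qed.

Lemma td : star_decomposition bags [set: T] e.
Proof.
split.
- by move=> t; apply: subsetT.
- move=> x _; case: (boolP (x \in D)) => xD.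
    by exists (Some (enum_rank_in xD x)); rewrite /= enum_rankK_in // !inE eqxx.
  by exists None; rewrite /= inE.
- move=> x y _ _ exy; case: (boolP (x \in D)) => xD.
    by exists (Some (enum_rank_in xD x)); rewrite /= enum_rankK_in // !inE eqxx exy orbT.
  case: (boolP (y \in D)) => yD.
    by exists (Some (enum_rank_in yD y)); rewrite /= enum_rankK_in // !inE eqxx esy exy orbT.
  by exists None; rewrite /= !inE xD yD.
move=> x t1 t2; case: (boolP (x \in D)) => xD.
  have hS t : x \in bags t -> exists2 i, t = Some i & enum_val i = x.
    case: t => [i|] /=; rewrite !inE; last by rewrite xD.
    case/orP => [/eqP -> | h]; first by exists i.
    by move: (Dind (enum_valP i) xD); rewrite h.
  move=> /hS [i -> ei] /hS [j -> ej].
  by have -> : i = j by apply: enum_val_inj; rewrite ei ej.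
set R := [rel s t | _].
have toN t : x \in bags t -> connect R t None /\ connect R None t.
  case: t => [i|] hx; last by split; apply: connect0.
  by split; apply: connect1; rewrite /R /= hx /= inE xD.
by move=> /toN [h1 _] /toN [_ h2]; apply: connect_trans h1 h2.
Qed.

Lemma adh : adhesion_three bags.
Proof.
move=> i; set v := enum_val i; have vD : v \in D by apply: enum_valP.
have -> : bags None :&: bags (Some i) = Nb e v.
  apply/setP => z; rewrite /= !inE; case: (eqVneq z v) => [->|zv] /=.
    by rewrite vD eirr.
  by case evz: (e v z); rewrite ?andbF // (NbC vD evz).
exact: DL.
Qed.

Lemma leaf4 i : #|bags (Some i)| = 4.
Proof.
by rewrite /= cardsU1 inE eirr DL // enum_valP.
Qed.

Lemma Cbig : 3 <= #|~: D|.
Proof.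
case: (set_0Vmem D) => [->|[v vD]].
  rewrite setC0 cardsT; case: hq => _ h5 _; move: h5; rewrite cardsT; lia.
rewrite -(DL vD); apply: subset_leq_card; apply/subsetP => w; rewrite !inE => evw.
exact: NbC vD evw.
Qed.

End Main.

Theorem mainTheorem11 (T : finType) (e : rel T) :
  symmetric e -> irreflexive e ->
  quasi_4_connected [set: T] e ->
  exists (n : nat) (bags : option 'I_n -> {set T}),
    [/\ star_decomposition bags [set: T] e,
        adhesion_three bags,
        internally_4_connected (bags None) (torso_rel bags e)
          \/ iso_complete 4 (bags None) (torso_rel bags e)
          \/ iso_complete 3 (bags None) (torso_rel bags e) &
        forall i : 'I_n, #|bags (Some i)| = 4].
Proof.
move=> esy eirr hq.
set L := [set x | #|Nb e x| == 3].
pose P (D : {set T}) := (D \subset L) && [forall u in D, forall w in D, ~~ e u w].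
have P0 : P set0.
  rewrite /P sub0set /=; apply/forallP => u; apply/implyP; by rewrite inE.
case: (maxset_exists P0) => D /maxsetP [PD maxD] _.
case/andP: PD => DsubL /forallP Dall.
have Dind : forall u w, u \in D -> w \in D -> ~~ e u w.
  move=> u w uD wD; move/implyP: (Dall u) => /(_ uD) /forallP /(_ w) /implyP; exact.
have DL : forall v, v \in D -> #|Nb e v| = 3.
  by move=> v /(subsetP DsubL); rewrite inE => /eqP.
have Dmax : forall x, x \notin D -> #|Nb e x| = 3 -> exists2 v, v \in D & e x v.
  move=> x xD x3.
  case: (boolP [exists v in D, e x v]) => [/existsP [v /andP [vD exv]]|hn]; first by exists v.
  exfalso.
  have hn' v : v \in D -> ~~ e x v.
    move=> vD; apply/negP => exv; move/negP: hn; apply; apply/existsP; exists v; by rewrite vD.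
  have P' : P (x |: D).
    rewrite /P; apply/andP; split.
      apply/subsetP => z; rewrite !inE => /orP [/eqP ->|zD]; last by move: (subsetP DsubL z zD); rewrite inE.
      by rewrite x3.
    apply/forallP => u; apply/implyP; rewrite !inE => /orP [/eqP ->|uD];
      apply/forallP => w; apply/implyP; rewrite !inE => /orP [/eqP ->|wD].
    - by rewrite eirr.
    - exact: hn'.
    - by rewrite esy; apply: hn'.
    - exact: Dind.
  have := maxD _ P' (subsetUr _ _) => E.
  by move: xD; rewrite -E setU11.
exists #|D|, (@bags T e D); split.
- exact: td.
- exact: adh.
- have -> : @bags T e D None = ~: D by [].
  have hC := Cbig hq Dind DL.
  have [h5|h4] := ltnP 4 #|~: D|.
    left; split => //.
      split; first by lia.
      exact: conn_H.
    move=> A B sep h3 pr; exfalso; exact: noSep sep h3 pr.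
  right; case: (eqVneq #|~: D| 4) => h.
    by left; apply: iso.
  right; apply: iso => //; lia.
- exact: leaf4.
Qed.
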